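(* With the notation below, \[ \frac{J_{30}^3}{\overline{J}_{0,5}}\cdot \frac{J_{3,6}}{J_{3,30}} - 2\cdot \frac{J_{6,60}\overline{J}_{5,30}\overline{J}_{10,30}}{\overline{J}_{0,5}\overline{J}_{0,30}\overline{J}_{3,30}}\cdot \frac{J_{6}J_{60}}{J_{30}^4} \cdot J_{9,30}J_{21,30}J_{15,30}J_{5,30} =0, \] and \[ 4\cdot \frac{J_{6,60}\overline{J}_{5,30}\overline{J}_{10,30}}{\overline{J}_{0,5}\overline{J}_{0,30}\overline{J}_{3,30}} \cdot \frac{J_{6}J_{60}}{J_{30}^4} \cdot J_{16,30}J_{20,30}J_{26,30} J_{10,30} =J_{4,10}J_{3,15}. \]
   Context: Let $q=e^{2\pi i\tau}$ with $\operatorname{Im}\tau>0$. For $x\in\mathbb{C}^*$, $j(x;q):=\sum_{n\in\mathbb{Z}}(-1)^nq^{n(n-1)/2}x^n=(x;q)_\infty(q/x;q)_\infty(q;q)_\infty$. For integers $a$ and positive integers $m$: $J_{a,m}:=j(q^a;q^m)$, $\overline{J}_{a,m}:=j(-q^a;q^m)$, and $J_m:=\prod_{i\ge1}(1-q^{mi})$. *)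

(* Defs.v *)
From Stdlib Require Import Reals ZArith.
From Coquelicot Require Import Coquelicot.

Open Scope C_scope.

Definition zpow (x : C) (n : Z) : C :=
  match n with
  | Z0 => 1
  | Zpos p => Cpow x (Pos.to_nat p)
  | Zneg p => / Cpow x (Pos.to_nat p)
  end.

(* q = e^{2 pi i tau}, written out: e^{-2 pi Im tau} (cos(2 pi Re tau) + i sin(2 pi Re tau)) *)
Definition qtau (tau : C) : C :=
  (exp (- (2 * PI * Im tau)) * cos (2 * PI * Re tau),
   exp (- (2 * PI * Im tau)) * sin (2 * PI * Re tau))%R.

Definition jterm (x q : C) (n : Z) : C :=
  zpow (-1) n * zpow q (n * (n - 1) / 2)%Z * zpow x n.

(* symmetric partial sum  sum_{n=-N}^{N} jterm x q n *)
Definition jpart (x q : C) (N : nat) : C :=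
  sum_n (fun k => jterm x q (Z.of_nat k - Z.of_nat N)%Z) (2 * N).

(* j(x;q) := sum_{n in Z} (-1)^n q^{n(n-1)/2} x^n, as the limit of the partial sums *)
Definition j (x q : C) : C := @lim C_CompleteNormedModule (filtermap (jpart x q) eventually).

Fixpoint Jpart (m : nat) (q : C) (N : nat) : C :=
  match N with
  | O => 1
  | S N' => Jpart m q N' * (1 - Cpow q (m * N))
  end.

Definition Jm (m : nat) (q : C) : C := @lim C_CompleteNormedModule (filtermap (Jpart m q) eventually).

Definition Jam (a : Z) (m : nat) (q : C) : C := j (zpow q a) (Cpow q m).
Definition Jbar (a : Z) (m : nat) (q : C) : C := j (- zpow q a) (Cpow q m).

(* Main.v *)
Require Import Defs.
From Stdlib Require Import Reals ZArith Lia Lra Psatz.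
From Coquelicot Require Import Coquelicot.
Open Scope C_scope.

Definition cv (u : nat -> C) (l : C) : Prop :=
  forall eps : R, (0 < eps)%R -> exists N, forall n, (N <= n)%nat -> (Cmod (u n - l) < eps)%R.

Lemma Cmod_tri3 (a b c : C) : (Cmod (a - c) <= Cmod (a - b) + Cmod (b - c))%R.
Proof.
  replace (a - c) with ((a - b) + (b - c)) by ring. apply Cmod_triangle.
Qed.

Lemma Cmod_sym (a b : C) : Cmod (a - b) = Cmod (b - a).
Proof. replace (a - b) with (- (b - a)) by ring. apply Cmod_opp. Qed.

Lemma Cmod_small_eq (a b : C) :
  (forall eps, (0 < eps)%R -> (Cmod (a - b) < eps)%R) -> a = b.
Proof.
  intros H. assert (Cmod (a - b) = 0%R).
  { destruct (Rle_lt_or_eq_dec 0 (Cmod (a - b)) (Cmod_ge_0 _)) as [h|h]; auto.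
    specialize (H _ h). lra. }
  apply Cmod_eq_0 in H0. replace a with ((a - b) + b) by ring. rewrite H0. ring.
Qed.

Lemma cv_unique u l1 l2 : cv u l1 -> cv u l2 -> l1 = l2.
Proof.
  intros H1 H2. apply Cmod_small_eq. intros eps he.
  destruct (H1 (eps/2)%R) as [N1 HN1]; [lra|].
  destruct (H2 (eps/2)%R) as [N2 HN2]; [lra|].
  specialize (HN1 (N1+N2)%nat ltac:(lia)). specialize (HN2 (N1+N2)%nat ltac:(lia)).
  pose proof (Cmod_tri3 l1 (u (N1+N2)%nat) l2). rewrite (Cmod_sym l1 (u _)) in H. lra.
Qed.

Lemma cv_const c : cv (fun _ => c) c.
Proof. intros eps he. exists O. intros. replace (c - c) with (RtoC 0) by ring. rewrite Cmod_0. lra. Qed.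

Lemma cv_ext u v l : (forall n, u n = v n) -> cv u l -> cv v l.
Proof. intros He H eps he. destruct (H eps he) as [N HN]. exists N. intros. rewrite <- He. auto. Qed.

Lemma cv_ext_ev u v l N0 : (forall n, (N0 <= n)%nat -> u n = v n) -> cv u l -> cv v l.
Proof. intros He H eps he. destruct (H eps he) as [N HN]. exists (N + N0)%nat. intros.
  rewrite <- He by lia. apply HN; lia. Qed.

Lemma cv_subseq u l phi : (forall n, (n <= phi n)%nat) -> cv u l -> cv (fun n => u (phi n)) l.
Proof. intros Hp H eps he. destruct (H eps he) as [N HN]. exists N. intros. apply HN.
  specialize (Hp n). lia. Qed.

Lemma cv_plus u v l m : cv u l -> cv v m -> cv (fun n => u n + v n) (l + m).
Proof.
  intros H1 H2 eps he.
  destruct (H1 (eps/2)%R) as [N1 HN1]; [lra|].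
  destruct (H2 (eps/2)%R) as [N2 HN2]; [lra|].
  exists (N1+N2)%nat. intros n hn.
  replace (u n + v n - (l + m)) with ((u n - l) + (v n - m)) by ring.
  eapply Rle_lt_trans. apply Cmod_triangle.
  specialize (HN1 n ltac:(lia)). specialize (HN2 n ltac:(lia)). lra.
Qed.

Lemma cv_mult u v l m : cv u l -> cv v m -> cv (fun n => u n * v n) (l * m).
Proof.
  intros H1 H2 eps he.
  set (d := Rmin 1 (eps / (1 + Cmod l + Cmod m))).
  assert (hd : (0 < d)%R).
  { unfold d. apply Rmin_glb_lt. lra. apply Rdiv_lt_0_compat. lra.
    pose proof (Cmod_ge_0 l). pose proof (Cmod_ge_0 m). lra. }
  assert (hd1 : (d <= 1)%R) by apply Rmin_l.
  assert (hd2 : (d * (1 + Cmod l + Cmod m) <= eps)%R).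
  { pose proof (Cmod_ge_0 l). pose proof (Cmod_ge_0 m).
    assert (d <= eps / (1 + Cmod l + Cmod m))%R by apply Rmin_r.
    apply Rmult_le_reg_r with (/ (1 + Cmod l + Cmod m))%R.
    apply Rinv_0_lt_compat; lra.
    rewrite Rmult_assoc, Rinv_r by lra. rewrite Rmult_1_r. exact H3. }
  destruct (H1 d hd) as [N1 HN1]. destruct (H2 d hd) as [N2 HN2].
  exists (N1+N2)%nat. intros n hn.
  specialize (HN1 n ltac:(lia)). specialize (HN2 n ltac:(lia)).
  replace (u n * v n - l * m) with ((u n - l) * (v n - m) + (l * (v n - m) + m * (u n - l))) by ring.
  eapply Rle_lt_trans. apply Cmod_triangle.
  rewrite Cmod_mult.
  eapply Rle_lt_trans. apply Rplus_le_compat_l. apply Cmod_triangle.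
  rewrite !Cmod_mult.
  pose proof (Cmod_ge_0 l). pose proof (Cmod_ge_0 m).
  pose proof (Cmod_ge_0 (u n - l)). pose proof (Cmod_ge_0 (v n - m)).
  nra.
Qed.

Lemma cv_scal c u l : cv u l -> cv (fun n => c * u n) (c * l).
Proof. intros H. apply cv_mult. apply cv_const. exact H. Qed.

Lemma cv_lim u l : cv u l -> @lim C_CompleteNormedModule (filtermap u eventually) = l.
Proof.
  intros H. set (F := filtermap u eventually).
  assert (PF : ProperFilter F) by (apply filtermap_proper_filter; apply eventually_filter).
  assert (CF : cauchy F).
  { intros eps. exists l. destruct (H eps (cond_pos eps)) as [N HN]. exists N.
    intros n hn. apply (@norm_compat1 C_AbsRing C_NormedModule). change (Cmod (u n - l) < eps)%R. apply HN. exact hn. }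
  pose proof (@complete_cauchy C_CompleteNormedModule F PF CF) as HC.
  symmetry. apply Cmod_small_eq. intros eps he.
  pose proof (@norm_factor_gt_0 C_AbsRing C_NormedModule) as hnf. set (nf := @norm_factor C_AbsRing C_NormedModule) in *.
  assert (he2 : (0 < eps / 2 / nf)%R) by (apply Rdiv_lt_0_compat; lra).
  destruct (HC (mkposreal _ he2)) as [N1 HN1].
  destruct (H (eps/2)%R ltac:(lra)) as [N2 HN2].
  specialize (HN1 (N1+N2)%nat ltac:(lia)). specialize (HN2 (N1+N2)%nat ltac:(lia)).
  apply (@norm_compat2 C_AbsRing C_NormedModule) in HN1. simpl in HN1.
  change (Cmod (u (N1 + N2)%nat - @lim C_CompleteNormedModule F) < nf * (eps / 2 / nf))%R in HN1.
  replace (nf * (eps / 2 / nf))%R with (eps/2)%R in HN1 by (field; lra).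
  pose proof (Cmod_tri3 l (u (N1+N2)%nat) (@lim C_CompleteNormedModule F)). rewrite Cmod_sym in HN2. lra.
Qed.

Lemma cauchy_cv u :
  (forall eps, (0 < eps)%R -> exists N, forall n m, (N <= n)%nat -> (N <= m)%nat -> (Cmod (u n - u m) < eps)%R) ->
  exists l, cv u l.
Proof.
  intros H. set (F := filtermap u eventually).
  assert (PF : ProperFilter F) by (apply filtermap_proper_filter; apply eventually_filter).
  assert (CF : cauchy F).
  { intros eps. destruct (H eps (cond_pos eps)) as [N HN]. exists (u N). exists N.
    intros n hn. apply (@norm_compat1 C_AbsRing C_NormedModule). change (Cmod (u n - u N) < eps)%R. apply HN; lia. }
  pose proof (@complete_cauchy C_CompleteNormedModule F PF CF) as HC.
  exists (@lim C_CompleteNormedModule F). intros eps he.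
  pose proof (@norm_factor_gt_0 C_AbsRing C_NormedModule) as hnf. set (nf := @norm_factor C_AbsRing C_NormedModule) in *.
  assert (he2 : (0 < eps / nf)%R) by (apply Rdiv_lt_0_compat; lra).
  destruct (HC (mkposreal _ he2)) as [N1 HN1]. exists N1. intros n hn.
  specialize (HN1 n hn).
  apply (@norm_compat2 C_AbsRing C_NormedModule) in HN1. simpl in HN1.
  change (Cmod (u n - @lim C_CompleteNormedModule F) < nf * (eps / nf))%R in HN1.
  replace (nf * (eps / nf))%R with eps in HN1 by (field; lra).
  exact HN1.
Qed.

Fixpoint prodc (f : nat -> C) (n : nat) : C :=
  match n with O => 1 | S n => prodc f n * f n end.
Fixpoint sumc (f : nat -> C) (n : nat) : C :=
  match n with O => 0 | S n => sumc f n + f n end.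
Arguments prodc f%_C_scope n%_nat_scope.
Arguments sumc f%_C_scope n%_nat_scope.
Fixpoint sumr (f : nat -> R) (n : nat) : R :=
  match n with O => 0%R | S n => (sumr f n + f n)%R end.

Arguments sumr f%_R_scope n%_nat_scope.

Lemma prodc_ext (f g : nat -> C) n : (forall k, (k < n)%nat -> f k = g k) -> prodc f n = prodc g n.
Proof. induction n; simpl; intros H; auto. rewrite IHn by (intros; apply H; lia). rewrite H by lia. auto. Qed.

Lemma prodc_mul f g n : prodc (fun k => f k * g k) n = prodc f n * prodc g n.
Proof. induction n; simpl. ring. rewrite IHn. ring. Qed.

Lemma prodc_add f a b : prodc f (a + b) = prodc f a * prodc (fun k => f (a + k)%nat) b.
Proof. induction b; simpl. rewrite Nat.add_0_r. ring. rewrite Nat.add_succ_r. simpl. rewrite IHb. ring. Qed.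

Lemma prodc_front f n : prodc f (S n) = f O * prodc (fun k => f (S k)) n.
Proof. induction n. simpl. ring. change (prodc f (S (S n))) with (prodc f (S n) * f (S n)).
  rewrite IHn. simpl. ring. Qed.

Lemma prodc_rev f n : prodc f n = prodc (fun k => f (n - 1 - k)%nat) n.
Proof.
  induction n. reflexivity.
  rewrite (prodc_front (fun k => f (S n - 1 - k)%nat)). change (prodc f (S n)) with (prodc f n * f n). rewrite IHn.
  replace (S n - 1 - 0)%nat with n by lia. rewrite Cmult_comm. f_equal.
  apply prodc_ext. intros k hk. f_equal. lia.
Qed.

Lemma prodc_block f d N :
  prodc f (d * N) = prodc (fun i => prodc (fun k => f (i + d * k)%nat) N) d.
Proof.
  induction N.
  - rewrite Nat.mul_0_r. simpl. induction d; simpl; auto. rewrite <- IHd. ring.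
  - replace (d * S N)%nat with (d * N + d)%nat by lia. rewrite prodc_add, IHN.
    simpl. rewrite prodc_mul. f_equal. apply prodc_ext. intros k hk. f_equal. lia.
Qed.

Lemma prodc_neq0 (f : nat -> C) n : (forall k, (k < n)%nat -> f k <> 0) -> prodc f n <> 0.
Proof.
  induction n; simpl; intros H. apply C1_nz.
  apply Cmult_neq_0. apply IHn. intros; apply H; lia. apply H; lia.
Qed.

Lemma sumc_ext (f g : nat -> C) n : (forall k, (k < n)%nat -> f k = g k) -> sumc f n = sumc g n.
Proof. induction n; simpl; intros H; auto. rewrite IHn by (intros; apply H; lia). rewrite H by lia. auto. Qed.

Lemma sumr_ext (f g : nat -> R) n : (forall k, (k < n)%nat -> f k = g k) -> sumr f n = sumr g n.
Proof. induction n; simpl; intros H; auto. rewrite IHn by (intros; apply H; lia). rewrite H by lia. auto. Qed.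

Lemma sumr_le (f g : nat -> R) n : (forall k, (k < n)%nat -> (f k <= g k)%R) -> (sumr f n <= sumr g n)%R.
Proof. induction n; simpl; intros H. lra. pose proof (H n ltac:(lia)). pose proof (IHn ltac:(intros; apply H; lia)). lra. Qed.

Lemma sumr_nonneg (f : nat -> R) n : (forall k, (k < n)%nat -> (0 <= f k)%R) -> (0 <= sumr f n)%R.
Proof. induction n; simpl; intros H. lra. pose proof (H n ltac:(lia)). pose proof (IHn ltac:(intros; apply H; lia)). lra. Qed.

Lemma sumr_scal (c : R) (f : nat -> R) n : sumr (fun k => c * f k)%R n = (c * sumr f n)%R.
Proof. induction n; simpl. ring. rewrite IHn. ring. Qed.

Lemma Cmod_sumc (f : nat -> C) n : (Cmod (sumc f n) <= sumr (fun k => Cmod (f k)) n)%R.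
Proof. induction n; simpl. rewrite Cmod_0. lra. eapply Rle_trans. apply Cmod_triangle. lra. Qed.

Lemma geom_sum (r : R) n : (sumr (fun k => r ^ k) n * (1 - r) = 1 - r ^ n)%R.
Proof. induction n; simpl. ring. rewrite Rmult_plus_distr_r, IHn. ring. Qed.

Lemma geom_bound (r : R) n : (0 <= r < 1)%R -> (sumr (fun k => r ^ k) n <= / (1 - r))%R.
Proof.
  intros hr. pose proof (geom_sum r n).
  assert (0 <= r ^ n)%R by (apply pow_le; lra).
  apply Rmult_le_reg_r with (1 - r)%R. lra. rewrite H, Rinv_l by lra. lra.
Qed.

Lemma geom_tail (K r : R) c n : (0 <= K)%R -> (0 <= r < 1)%R ->
  (sumr (fun k => K * r ^ (c + k))%R n <= K * r ^ c / (1 - r))%R.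
Proof.
  intros hK hr. rewrite (sumr_ext _ (fun k => (K * r ^ c) * r ^ k)%R).
  rewrite sumr_scal. unfold Rdiv. apply Rmult_le_compat_l.
  apply Rmult_le_pos; auto. apply pow_le; lra. apply geom_bound; auto.
  intros. rewrite pow_add. ring.
Qed.

Lemma pow_le_one (r : R) n : (0 <= r <= 1)%R -> (r ^ n <= 1)%R.
Proof. intros hr. induction n; simpl. lra. assert (0 <= r ^ n)%R by (apply pow_le; lra). nra. Qed.

Lemma pow_decr (r : R) a b : (0 <= r <= 1)%R -> (a <= b)%nat -> (r ^ b <= r ^ a)%R.
Proof.
  intros hr hab. replace b with (a + (b - a))%nat by lia. rewrite pow_add.
  assert (0 <= r ^ a)%R by (apply pow_le; lra).
  assert (r ^ (b - a) <= 1)%R by (apply pow_le_one; lra). nra.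
Qed.

Lemma geom_small (r : R) : (0 <= r < 1)%R -> forall y, (0 < y)%R -> exists N, forall n, (N <= n)%nat -> (r ^ n < y)%R.
Proof.
  intros hr y hy. destruct (pow_lt_1_zero r) with y as [N HN]. rewrite Rabs_pos_eq; lra. auto.
  exists N. intros n hn. specialize (HN n hn). rewrite Rabs_pos_eq in HN; auto. apply pow_le; lra.
Qed.

Lemma exp_m1_bound t : (0 <= t)%R -> (exp t - 1 <= t * exp t)%R.
Proof.
  intros ht. pose proof (exp_ineq1_le (- t)).
  assert (exp (-t) * exp t = 1)%R by (rewrite <- exp_plus; replace (-t + t)%R with 0%R by ring; apply exp_0).
  pose proof (exp_pos t). nra.
Qed.

Lemma prod_bound (u : nat -> C) n :
  (Cmod (prodc (fun k => (1 + u k)%C) n - 1) <= exp (sumr (fun k => Cmod (u k)) n) - 1)%R.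
Proof.
  induction n; simpl.
  - replace (1 - 1) with (RtoC 0) by ring. rewrite Cmod_0, exp_0. lra.
  - set (P := prodc (fun k => 1 + u k) n) in *. set (S := sumr (fun k => Cmod (u k)) n) in *.
    replace (P * (1 + u n) - 1) with ((P - 1) * (1 + u n) + u n) by ring.
    eapply Rle_trans. apply Cmod_triangle. rewrite Cmod_mult.
    pose proof (Cmod_triangle 1 (u n)). rewrite Cmod_1 in H.
    pose proof (Cmod_ge_0 (u n)). pose proof (Cmod_ge_0 (P - 1)).
    pose proof (exp_ineq1_le (Cmod (u n))). rewrite exp_plus.
    pose proof (exp_pos S). pose proof (exp_pos (Cmod (u n))).
    assert (Cmod (P - 1) * Cmod (1 + u n) <= (exp S - 1) * (1 + Cmod (u n)))%R.
    { apply Rmult_le_compat; auto. apply Cmod_ge_0. }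
    nra.
Qed.

Lemma prod_abs_bound (u : nat -> C) n :
  (Cmod (prodc (fun k => (1 + u k)%C) n) <= exp (sumr (fun k => Cmod (u k)) n))%R.
Proof.
  pose proof (prod_bound u n). pose proof (Cmod_tri3 (prodc (fun k => 1 + u k) n) 1 0).
  replace (prodc (fun k => 1 + u k) n - 0) with (prodc (fun k => 1 + u k) n) in H0 by ring.
  replace (1 - 0) with (RtoC 1) in H0 by ring. rewrite Cmod_1 in H0. lra.
Qed.

Lemma sum_bound (u : nat -> C) K r c n : (0 <= K)%R -> (0 <= r < 1)%R ->
  (forall k, (Cmod (u k) <= K * r ^ k)%R) ->
  (sumr (fun k => Cmod (u (c + k)%nat)) n <= K * r ^ c / (1 - r))%R.
Proof.
  intros hK hr hu. eapply Rle_trans. apply sumr_le. intros k _. apply hu.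
  apply geom_tail; auto.
Qed.

Lemma exp_le_mono a b : (a <= b)%R -> (exp a <= exp b)%R.
Proof. intros h. destruct (Rle_lt_or_eq_dec _ _ h) as [h'|h']. left. apply exp_increasing; auto. subst; lra. Qed.

Lemma prod_cv (u : nat -> C) K r : (0 <= K)%R -> (0 <= r < 1)%R ->
  (forall k, (Cmod (u k) <= K * r ^ k)%R) ->
  exists l, cv (prodc (fun k => 1 + u k)) l.
Proof.
  intros hK hr hu. apply cauchy_cv.
  set (S := (K / (1 - r))%R).
  assert (hS : (0 <= S)%R) by (unfold S; apply Rdiv_le_0_compat; lra).
  assert (key : forall n d, (Cmod (prodc (fun k => (1 + u k)%C) (n + d) - prodc (fun k => (1 + u k)%C) n)
                     <= exp S * exp S * (K * r ^ n / (1 - r)))%R).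
  { intros n d. rewrite prodc_add.
    set (P := prodc (fun k => 1 + u k) n). set (T := prodc (fun k => 1 + u (n + k)%nat) d).
    replace (P * T - P) with (P * (T - 1)) by ring. rewrite Cmod_mult.
    assert (h1 : (Cmod P <= exp S)%R).
    { eapply Rle_trans. apply prod_abs_bound. apply exp_le_mono.
      pose proof (sum_bound u K r 0 n hK hr hu). simpl in H. unfold S.
      replace (K * 1)%R with K in H by ring. exact H. }
    set (t := sumr (fun k => Cmod (u (n + k)%nat)) d).
    assert (ht : (t <= K * r ^ n / (1 - r))%R) by (apply sum_bound; auto).
    assert (ht0 : (0 <= t)%R) by (apply sumr_nonneg; intros; apply Cmod_ge_0).
    assert (htS : (t <= S)%R).
    { eapply Rle_trans. apply ht. unfold S, Rdiv. apply Rmult_le_compat_r.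
      apply Rlt_le, Rinv_0_lt_compat; lra.
      assert (r ^ n <= 1)%R by (apply pow_le_one; lra). nra. }
    assert (h2 : (Cmod (T - 1) <= t * exp S)%R).
    { eapply Rle_trans. apply (prod_bound (fun k => u (n + k)%nat)).
      eapply Rle_trans. apply exp_m1_bound; auto.
      apply Rmult_le_compat_l; auto. apply exp_le_mono; auto. }
    pose proof (Cmod_ge_0 P). pose proof (Cmod_ge_0 (T - 1)). pose proof (exp_pos S).
    assert (Cmod P * Cmod (T - 1) <= exp S * (t * exp S))%R by (apply Rmult_le_compat; auto).
    nra. }
  intros eps he.
  set (B := (exp S * exp S * (K + 1) / (1 - r))%R).
  assert (hB : (0 < B)%R).
  { unfold B. apply Rdiv_lt_0_compat; [|lra]. pose proof (exp_pos S).
    apply Rmult_lt_0_compat; [|lra]. apply Rmult_lt_0_compat; auto. }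
  destruct (geom_small r hr (eps / B)%R) as [N HN]. apply Rdiv_lt_0_compat; auto.
  exists N. intros n m hn hm.
  assert (gen : forall a b, (N <= a)%nat -> (a <= b)%nat ->
     (Cmod (prodc (fun k => (1 + u k)%C) b - prodc (fun k => (1 + u k)%C) a) < eps)%R).
  { intros a b ha hab. replace b with (a + (b - a))%nat by lia.
    eapply Rle_lt_trans. apply key.
    specialize (HN a ha).
    assert (r ^ a * B < eps)%R.
    { apply Rmult_lt_reg_r with (/ B)%R. apply Rinv_0_lt_compat; auto.
      rewrite Rmult_assoc, Rinv_r by lra. rewrite Rmult_1_r. exact HN. }
    assert (0 <= r ^ a)%R by (apply pow_le; lra).
    assert (exp S * exp S * (K * r ^ a / (1 - r)) <= r ^ a * B)%R.
    { unfold B, Rdiv. pose proof (exp_pos S).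
      assert (0 < / (1 - r))%R by (apply Rinv_0_lt_compat; lra).
      assert (0 <= exp S * exp S)%R by nra.
      assert (0 <= exp S * exp S * / (1 - r))%R by nra.
      nra. }
    lra. }
  destruct (Nat.le_ge_cases n m).
  - rewrite Cmod_sym. apply gen; auto.
  - apply gen; auto.
Qed.

Lemma prod_lim_neq0 (u : nat -> C) K r l : (0 <= K)%R -> (0 <= r < 1)%R ->
  (forall k, (Cmod (u k) <= K * r ^ k)%R) -> (forall k, 1 + u k <> 0) ->
  cv (prodc (fun k => 1 + u k)) l -> l <> 0.
Proof.
  intros hK hr hu hnz hl Hl0. subst l.
  destruct (geom_small r hr (/4 * (1 - r) / (K + 1))%R) as [k0 Hk0].
  { apply Rdiv_lt_0_compat; lra. }
  specialize (Hk0 k0 (le_n _)).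
  set (P0 := prodc (fun k => (1 + u k)%C) k0).
  assert (hP0 : (0 < Cmod P0)%R).
  { apply Cmod_gt_0. apply prodc_neq0. intros; apply hnz. }
  assert (key : forall d, (Cmod P0 / 4 <= Cmod (prodc (fun k => (1 + u k)%C) (k0 + d)))%R).
  { intros d. rewrite prodc_add. fold P0. rewrite Cmod_mult.
    set (T := prodc (fun k => 1 + u (k0 + k)%nat) d).
    set (t := sumr (fun k => Cmod (u (k0 + k)%nat)) d).
    assert (ht : (t <= K * r ^ k0 / (1 - r))%R) by (apply sum_bound; auto).
    assert (ht0 : (0 <= t)%R) by (apply sumr_nonneg; intros; apply Cmod_ge_0).
    assert (ht1 : (t <= /4)%R).
    { eapply Rle_trans. apply ht.
      assert (K * r ^ k0 <= (K + 1) * r ^ k0)%R.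
      { assert (0 <= r ^ k0)%R by (apply pow_le; lra). nra. }
      assert ((K+1) * r ^ k0 < / 4 * (1 - r))%R.
      { apply Rmult_lt_reg_r with (/ (K + 1))%R. apply Rinv_0_lt_compat; lra.
        replace ((K + 1) * r ^ k0 * / (K + 1))%R with (r ^ k0)%R by (field; lra). exact Hk0. }
      apply Rmult_le_reg_r with (1 - r)%R. lra. unfold Rdiv.
      rewrite Rmult_assoc, Rinv_l by lra. lra. }
    assert (h2 : (Cmod (T - 1) <= t * exp t)%R).
    { eapply Rle_trans. apply (prod_bound (fun k => u (k0 + k)%nat)). apply exp_m1_bound; auto. }
    assert (exp t <= 3)%R.
    { eapply Rle_trans. apply exp_le_mono with (b := 1%R). lra. apply exp_le_3. }
    assert (Cmod (T - 1) <= 3/4)%R by nra.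
    pose proof (Cmod_tri3 1 T 0).
    replace (T - 0) with T in H1 by ring. replace (1 - 0) with (RtoC 1) in H1 by ring.
    rewrite Cmod_1 in H1. rewrite Cmod_sym in H0.
    assert (/4 <= Cmod T)%R by lra. nra. }
  destruct (hl (Cmod P0 / 4)%R) as [N HN]. lra.
  specialize (HN (k0 + N)%nat ltac:(lia)). specialize (key N).
  assert (E : forall x : C, x - 0 = x) by (intros; ring). rewrite E in HN.
  lra.
Qed.

Fixpoint tri (n : nat) : nat := match n with O => O | S n' => (tri n' + n')%nat end.

Fixpoint gb (Q : C) (N m : nat) : C :=
  match N, m with
  | _, O => 1
  | O, S _ => 0
  | S N', S m' => gb Q N' (S m') + Q ^ (N' - m') * gb Q N' m'
  end.

Lemma gb_zero Q N m : (N < m)%nat -> gb Q N m = 0.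
Proof.
  revert m; induction N; intros m h; destruct m; try lia; simpl; auto.
  rewrite !IHN by lia. ring.
Qed.

Lemma sumc_front (f : nat -> C) n : sumc f (S n) = f O + sumc (fun k => f (S k)) n.
Proof. induction n. simpl. ring. change (sumc f (S (S n))) with (sumc f (S n) + f (S n)). rewrite IHn. simpl. ring. Qed.

Lemma sumc_plus (f g : nat -> C) n : sumc (fun k => f k + g k) n = sumc f n + sumc g n.
Proof. induction n; simpl. ring. rewrite IHn. ring. Qed.

Lemma sumc_scal (c : C) (f : nat -> C) n : sumc (fun k => c * f k) n = c * sumc f n.
Proof. induction n; simpl. ring. rewrite IHn. ring. Qed.

Lemma sumc_minus (f g : nat -> C) n : sumc (fun k => f k - g k) n = sumc f n - sumc g n.
Proof. induction n; simpl. ring. rewrite IHn. ring. Qed.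

Lemma qbin (Q z : C) N :
  prodc (fun i => 1 + z * Q ^ i) N = sumc (fun m => gb Q N m * Q ^ (tri m) * z ^ m) (S N).
Proof.
  induction N.
  - simpl. ring.
  - change (prodc (fun i => 1 + z * Q ^ i) (S N)) with (prodc (fun i => 1 + z * Q ^ i) N * (1 + z * Q ^ N)).
    rewrite IHN.
    transitivity (sumc (fun m => gb Q N m * Q ^ tri m * z ^ m) (S N)
                  + sumc (fun m => (z * Q ^ N) * (gb Q N m * Q ^ tri m * z ^ m)) (S N)).
    { rewrite sumc_scal. ring. }
    rewrite (sumc_front (fun m => gb Q (S N) m * Q ^ tri m * z ^ m)).
    rewrite (sumc_ext (fun k => gb Q (S N) (S k) * Q ^ tri (S k) * z ^ S k)
       (fun k => gb Q N (S k) * Q ^ tri (S k) * z ^ S k + (z * Q ^ N) * (gb Q N k * Q ^ tri k * z ^ k))).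
    2:{ intros k hk. simpl gb. simpl tri.
        replace (Q ^ N) with (Q ^ (N - k) * Q ^ k) by (rewrite <- Cpow_add_r; f_equal; lia).
        rewrite !Cpow_add_r. simpl. ring. }
    rewrite sumc_plus.
    assert (E : sumc (fun m => gb Q N m * Q ^ tri m * z ^ m) (S N) =
                1 * 1 * 1 + sumc (fun k => gb Q N (S k) * Q ^ tri (S k) * z ^ S k) (S N)).
    { rewrite sumc_front. simpl sumc at 2. rewrite (gb_zero Q N (S N)) by lia.
      replace (gb Q N 0) with (RtoC 1) by (destruct N; reflexivity). simpl. ring. }
    rewrite E. replace (gb Q (S N) 0) with (RtoC 1) by reflexivity. simpl tri. simpl Cpow. ring.
Qed.

Definition qp (Q : C) (n : nat) : C := prodc (fun k => 1 - Q ^ (S k)) n.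

Lemma qp_S Q n : qp Q (S n) = qp Q n * (1 - Q ^ (S n)).
Proof. reflexivity. Qed.

Lemma gb_closed Q N m : (m <= N)%nat -> gb Q N m * qp Q m * qp Q (N - m) = qp Q N.
Proof.
  revert m. induction N; intros m hm.
  - destruct m; [|lia]. simpl. unfold qp. simpl. ring.
  - destruct m.
    + replace (S N - 0)%nat with (S N) by lia. replace (gb Q (S N) 0) with (RtoC 1) by reflexivity.
      unfold qp at 1. simpl prodc. ring.
    + simpl gb. destruct (Nat.eq_dec m N) as [e|ne].
      * subst m. rewrite (gb_zero Q N (S N)) by lia. replace (N - N)%nat with O by lia.
        replace (S N - S N)%nat with O by lia.
        pose proof (IHN N (le_n _)) as IH. replace (N - N)%nat with O in IH by lia.
        rewrite !qp_S. transitivity ((gb Q N N * qp Q N * qp Q 0) * (1 - Q ^ S N)).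
        simpl Cpow. ring. rewrite IH. reflexivity.
      * assert (hk : exists k, (N - m = S k)%nat) by (exists (N - m - 1)%nat; lia).
        destruct hk as [k hk].
        pose proof (IHN (S m) ltac:(lia)) as IH1. replace (N - S m)%nat with k in IH1 by lia.
        pose proof (IHN m ltac:(lia)) as IH2. rewrite hk in IH2.
        replace (S N - S m)%nat with (S k) by lia. rewrite hk.
        rewrite !qp_S in *.
        assert (EQ : Q ^ S k * Q ^ S m = Q ^ S N) by (rewrite <- Cpow_add_r; f_equal; lia).
        transitivity (gb Q N (S m) * (qp Q m * (1 - Q ^ S m)) * qp Q k * (1 - Q ^ S k)
           + Q ^ S k * (gb Q N m * qp Q m * (qp Q k * (1 - Q ^ S k))) * (1 - Q ^ S m)).
        { ring. }
        rewrite IH1, IH2. rewrite <- EQ. ring.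
Qed.

Lemma prodc_S (f : nat -> C) n : prodc f (S n) = prodc f n * f n.
Proof. reflexivity. Qed.

Lemma Cmult_reg_r (x y z : C) : z <> 0 -> x * z = y * z -> x = y.
Proof. intros hz h. replace x with (x * z * / z) by (field; auto). rewrite h. field; auto. Qed.

Lemma zpow_eq (c : C) (a : Z) : c <> 0 -> zpow c a = c ^ Z.to_nat a / c ^ Z.to_nat (- a).
Proof.
  intros hc. destruct a; simpl.
  - field.
  - field.
  - field. apply Cpow_nz; auto.
Qed.

Lemma zpow_add (c : C) a b : c <> 0 -> zpow c (a + b) = zpow c a * zpow c b.
Proof.
  intros hc. rewrite !zpow_eq by auto.
  assert (Hp : forall n, c ^ n <> 0) by (intros; apply Cpow_nz; auto).
  assert (E : (Z.to_nat (a + b) + Z.to_nat (- a) + Z.to_nat (- b) =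
               Z.to_nat a + Z.to_nat b + Z.to_nat (- (a + b)))%nat) by lia.
  assert (E2 : c ^ Z.to_nat (a + b) * c ^ Z.to_nat (- a) * c ^ Z.to_nat (- b) =
               c ^ Z.to_nat a * c ^ Z.to_nat b * c ^ Z.to_nat (- (a + b))).
  { rewrite <- !Cpow_add_r. f_equal. exact E. }
  apply (Cmult_reg_r _ _ (c ^ Z.to_nat (- (a + b)) * c ^ Z.to_nat (- a) * c ^ Z.to_nat (- b))).
  { repeat apply Cmult_neq_0; auto. }
  transitivity (c ^ Z.to_nat (a + b) * c ^ Z.to_nat (- a) * c ^ Z.to_nat (- b)).
  { field; auto. }
  rewrite E2. field; auto.
Qed.

Lemma zpow_nat (c : C) n : zpow c (Z.of_nat n) = c ^ n.
Proof. destruct n. reflexivity. simpl. rewrite SuccNat2Pos.id_succ. reflexivity. Qed.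

Lemma zpow_neg_nat (c : C) n : c <> 0 -> zpow c (- Z.of_nat n) = / c ^ n.
Proof. intros hc. rewrite zpow_eq by auto. rewrite Z.opp_involutive, Nat2Z.id.
  replace (Z.to_nat (- Z.of_nat n)) with O by lia. simpl. field. apply Cpow_nz; auto. Qed.

Lemma tri_spec k : (2 * Z.of_nat (tri k) = Z.of_nat k * (Z.of_nat k - 1))%Z.
Proof. induction k; simpl tri. reflexivity. rewrite Nat2Z.inj_add, Nat2Z.inj_succ. nia. Qed.

Lemma half_exact (w j : Z) : (j * (j - 1) = w * 2)%Z -> (j * (j - 1) / 2 = w)%Z.
Proof. intros h. rewrite h. apply Z.div_mul. lia. Qed.

Lemma expo_key m n :
  ((Z.of_nat m - Z.of_nat n) * (Z.of_nat m - Z.of_nat n - 1) / 2 + Z.of_nat (n * m)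
   = Z.of_nat (tri m + tri (S n)))%Z.
Proof.
  pose proof (tri_spec m). pose proof (tri_spec (S n)).
  rewrite (half_exact (Z.of_nat (tri m) + Z.of_nat (tri (S n)) - Z.of_nat n * Z.of_nat m)).
  - rewrite Nat2Z.inj_add, Nat2Z.inj_mul. ring.
  - rewrite Nat2Z.inj_succ in H0. nia.
Qed.

Lemma Pi0_eq (x Q : C) n : Q <> 0 ->
  prodc (fun k => - x / Q ^ S k) n = (- x) ^ n / Q ^ tri (S n).
Proof.
  intros hQ. induction n.
  - simpl. field.
  - rewrite prodc_S, IHn. change (tri (S (S n))) with (tri (S n) + S n)%nat. rewrite Cpow_add_r.
    change ((- x) ^ (S n)) with (- x * (- x) ^ n). field. split; apply Cpow_nz; auto.
Qed.

Lemma solve_div (a b c : C) : b <> 0 -> a * b = c -> a = c / b.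
Proof. intros hb h. rewrite <- h. field. auto. Qed.

Lemma m1_neq0 : (-1 : C) <> 0.
Proof. intros h. apply C1_nz. replace (RtoC 1) with (- (-1) : C) by ring. rewrite h. ring. Qed.

Lemma jterm_shift (x Q : C) m n : x <> 0 -> Q <> 0 ->
  Q ^ tri m * (- x / Q ^ n) ^ m
  = prodc (fun k => - x / Q ^ S k) n * jterm x Q (Z.of_nat m - Z.of_nat n).
Proof.
  intros hx hQ. rewrite Pi0_eq by auto. unfold jterm.
  set (j := (Z.of_nat m - Z.of_nat n)%Z).
  assert (hm1 := m1_neq0).
  assert (E1 : zpow (-1) j * (-1) ^ n = (-1) ^ m).
  { rewrite <- (zpow_nat (-1) n), <- zpow_add by auto. rewrite <- zpow_nat. f_equal. unfold j. lia. }
  assert (E2 : zpow x j * x ^ n = x ^ m).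
  { rewrite <- (zpow_nat x n), <- zpow_add by auto. rewrite <- zpow_nat. f_equal. unfold j. lia. }
  assert (E3 : zpow Q (j * (j - 1) / 2) * Q ^ (n * m) = Q ^ tri m * Q ^ tri (S n)).
  { rewrite <- (zpow_nat Q (n * m)), <- zpow_add by auto. rewrite <- Cpow_add_r, <- zpow_nat.
    f_equal. apply expo_key. }
  apply solve_div in E1; [|apply Cpow_nz; auto].
  apply solve_div in E2; [|apply Cpow_nz; auto].
  apply solve_div in E3; [|apply Cpow_nz; auto].
  rewrite E1, E2, E3.
  replace (- x / Q ^ n) with ((-1) * x * / Q ^ n) by (field; apply Cpow_nz; auto).
  replace (- x) with ((-1) * x) by ring.
  rewrite !Cpow_mult_l. rewrite Cpow_inv by (apply Cpow_nz; auto). rewrite <- Cpow_mult_r.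
  field. repeat split; apply Cpow_nz; auto.
Qed.

Definition Ep (x Q : C) (n : nat) : C := prodc (fun k => (1 - x * Q ^ k) * (1 - Q ^ S k / x)) n.

Lemma finite_jtp (x Q : C) n : x <> 0 -> Q <> 0 ->
  Ep x Q n = sumc (fun m => jterm x Q (Z.of_nat m - Z.of_nat n) * gb Q (n + n) m) (S (n + n)).
Proof.
  intros hx hQ.
  set (z := - x / Q ^ n).
  pose proof (qbin Q z (n + n)) as H.
  rewrite prodc_add in H.
  rewrite (prodc_ext (fun k => 1 + z * Q ^ (n + k)) (fun k => 1 - x * Q ^ k)) in H.
  2:{ intros k _. unfold z. rewrite Cpow_add_r. field. apply Cpow_nz; auto. }
  rewrite prodc_rev in H.
  rewrite (prodc_ext (fun k => 1 + z * Q ^ (n - 1 - k)) (fun k => (- x / Q ^ S k) * (1 - Q ^ S k / x))) in H.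
  2:{ intros k hk. unfold z.
      assert (EQ : Q ^ (n - 1 - k) * Q ^ S k = Q ^ n) by (rewrite <- Cpow_add_r; f_equal; lia).
      rewrite <- EQ. field. split; auto. split; apply Cpow_nz; auto. }
  rewrite prodc_mul in H.
  rewrite (sumc_ext _ (fun m => prodc (fun k => - x / Q ^ S k) n * (jterm x Q (Z.of_nat m - Z.of_nat n) * gb Q (n + n) m))) in H.
  2:{ intros m hm. transitivity (gb Q (n+n) m * (Q ^ tri m * z ^ m)). ring.
      unfold z. rewrite jterm_shift by auto. ring. }
  rewrite sumc_scal in H.
  assert (hP : prodc (fun k => - x / Q ^ S k) n <> 0).
  { apply prodc_neq0. intros k _. intros h. apply hx.
    assert (E : - x = (- x / Q ^ S k) * Q ^ S k) by (field; apply Cpow_nz; auto).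
    rewrite h in E. replace x with (- (- x)) by ring. rewrite E. ring. }
  unfold Ep. rewrite prodc_mul.
  apply (Cmult_reg_r _ _ _ hP). rewrite (Cmult_comm (sumc _ _)). rewrite <- H. ring.
Qed.


Lemma pow_ge_one (a : R) n : (1 <= a)%R -> (1 <= a ^ n)%R.
Proof. intros h. induction n; simpl. lra. nra. Qed.

Lemma gauss_bound (r X : R) : (0 < r < 1)%R -> (0 <= X)%R ->
  exists A, (0 <= A)%R /\ forall l, (r ^ tri l * X ^ l <= A * r ^ (2 * l))%R.
Proof.
  intros hr hX.
  destruct (geom_small r ltac:(lra) (r ^ 2 / (X + 1))%R) as [L HL].
  { apply Rdiv_lt_0_compat. apply pow_lt; lra. lra. }
  set (A := ((X + 1) ^ L * / r ^ (2 * L))%R).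
  assert (hr2L : (0 < r ^ (2 * L))%R) by (apply pow_lt; lra).
  assert (hXL : (1 <= (X + 1) ^ L)%R) by (apply pow_ge_one; lra).
  assert (hA : (0 <= A)%R).
  { unfold A. apply Rmult_le_pos. lra. left; apply Rinv_0_lt_compat; auto. }
  exists A. split; auto.
  assert (direct : forall l, (l <= L)%nat -> (r ^ tri l * X ^ l <= A * r ^ (2 * l))%R).
  { intros l hl.
    assert (h1 : (r ^ tri l <= 1)%R) by (apply pow_le_one; lra).
    assert (h2 : (X ^ l <= (X + 1) ^ L)%R).
    { eapply Rle_trans. apply pow_incr with (y := (X + 1)%R). lra. apply Rle_pow; [lra|lia]. }
    assert (h3 : (r ^ (2 * L) <= r ^ (2 * l))%R) by (apply pow_decr; [lra|lia]).
    assert (h4 : ((X + 1) ^ L <= A * r ^ (2 * l))%R).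
    { unfold A. apply Rmult_le_reg_r with (r ^ (2 * L))%R; auto.
      replace ((X + 1) ^ L * / r ^ (2 * L) * r ^ (2 * l) * r ^ (2 * L))%R
        with ((X + 1) ^ L * r ^ (2 * l))%R by (field; lra).
      apply Rmult_le_compat_l; lra. }
    assert (0 <= r ^ tri l)%R by (apply pow_le; lra).
    assert (0 <= X ^ l)%R by (apply pow_le; lra). nra. }
  intros l. induction l.
  - apply direct. lia.
  - destruct (le_lt_dec (S l) L) as [h|h]. apply direct; auto.
    specialize (HL l ltac:(lia)).
    change (tri (S l)) with (tri l + l)%nat. rewrite pow_add.
    replace (2 * S l)%nat with (2 * l + 2)%nat by lia. rewrite pow_add. change (X ^ S l)%R with (X * X ^ l)%R.
    assert (hrl : (0 <= r ^ l)%R) by (apply pow_le; lra).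
    assert (hk : (r ^ l * X <= r ^ 2)%R).
    { assert (r ^ l * (X + 1) < r ^ 2)%R.
      { apply Rmult_lt_reg_r with (/ (X + 1))%R. apply Rinv_0_lt_compat; lra.
        replace (r ^ l * (X + 1) * / (X + 1))%R with (r ^ l)%R by (field; lra). exact HL. }
      nra. }
    assert (0 <= r ^ tri l)%R by (apply pow_le; lra).
    assert (0 <= X ^ l)%R by (apply pow_le; lra).
    assert (0 <= r ^ tri l * X ^ l)%R by nra.
    assert (0 <= A * r ^ (2 * l))%R by (apply Rmult_le_pos; auto; apply pow_le; lra).
    replace (r ^ tri l * r ^ l * (X * X ^ l))%R with ((r ^ tri l * X ^ l) * (r ^ l * X))%R by ring.
    replace (A * (r ^ (2 * l) * r ^ 2))%R with ((A * r ^ (2 * l)) * r ^ 2)%R by ring. apply Rmult_le_compat; auto; nra.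
Qed.

Lemma Cmod_m1' : Cmod (-1) = 1%R.
Proof. rewrite Cmod_R. unfold Rabs. destruct Rcase_abs; lra. Qed.

Lemma Cmod_m1_pow n : Cmod ((-1) ^ n) = 1%R.
Proof. rewrite Cmod_pow, Cmod_m1'. apply pow1. Qed.

Lemma jterm_pos_mod (x Q : C) l :
  Cmod (jterm x Q (Z.of_nat l)) = (Cmod Q ^ tri l * Cmod x ^ l)%R.
Proof.
  unfold jterm. rewrite (half_exact (Z.of_nat (tri l))).
  2:{ pose proof (tri_spec l). lia. }
  rewrite !zpow_nat, !Cmod_mult, !Cmod_pow, Cmod_m1', pow1. ring.
Qed.

Lemma jterm_neg_mod (x Q : C) l : x <> 0 ->
  Cmod (jterm x Q (- Z.of_nat l)) = (Cmod Q ^ tri (S l) * (/ Cmod x) ^ l)%R.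
Proof.
  intros hx. unfold jterm. rewrite (half_exact (Z.of_nat (tri (S l)))).
  2:{ pose proof (tri_spec (S l)). rewrite Nat2Z.inj_succ in H. lia. }
  rewrite !zpow_neg_nat, !zpow_nat by (auto using m1_neq0).
  rewrite !Cmod_mult, Cmod_pow, !Cmod_inv by (apply Cpow_nz; auto using m1_neq0).
  rewrite !Cmod_pow, Cmod_m1', pow1, pow_inv. field.
  apply pow_nonzero. intros h. apply Cmod_eq_0 in h. auto.
Qed.

Lemma prod_minus_eq (v : nat -> C) n : prodc (fun k => 1 - v k) n = prodc (fun k => 1 + (- v k)) n.
Proof. apply prodc_ext. intros; ring. Qed.

Lemma prod_cv_minus (v : nat -> C) K r : (0 <= K)%R -> (0 <= r < 1)%R ->
  (forall k, (Cmod (v k) <= K * r ^ k)%R) -> exists l, cv (prodc (fun k => 1 - v k)) l.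
Proof.
  intros hK hr hv. destruct (prod_cv (fun k => - v k) K r hK hr) as [l hl].
  { intros k. rewrite Cmod_opp. auto. }
  exists l. eapply cv_ext; [|exact hl]. intros n. symmetry. apply prod_minus_eq.
Qed.

Lemma prod_lim_neq0_minus (v : nat -> C) K r l : (0 <= K)%R -> (0 <= r < 1)%R ->
  (forall k, (Cmod (v k) <= K * r ^ k)%R) -> (forall k, 1 - v k <> 0) ->
  cv (prodc (fun k => 1 - v k)) l -> l <> 0.
Proof.
  intros hK hr hv hnz hl. apply (prod_lim_neq0 (fun k => - v k) K r l hK hr).
  { intros k. rewrite Cmod_opp. auto. }
  { intros k. replace (1 + - v k) with (1 - v k) by ring. auto. }
  eapply cv_ext; [|exact hl]. intros n. apply prod_minus_eq.
Qed.

Lemma prod_bound_minus (v : nat -> C) n :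
  (Cmod (prodc (fun k => (1 - v k)%C) n - 1) <= exp (sumr (fun k => Cmod (v k)) n) - 1)%R.
Proof.
  rewrite prod_minus_eq. eapply Rle_trans. apply prod_bound.
  right. f_equal. f_equal. apply sumr_ext. intros. apply Cmod_opp.
Qed.

Lemma prod2_bound (P R : C) a b : (0 <= a)%R -> (0 <= b)%R ->
  (Cmod (P - 1) <= a)%R -> (Cmod (R - 1) <= b)%R -> (Cmod (P * R - 1) <= a * b + a + b)%R.
Proof.
  intros ha hb h1 h2.
  replace (P * R - 1) with ((P - 1) * (R - 1) + ((P - 1) + (R - 1))) by ring.
  eapply Rle_trans. apply Cmod_triangle. rewrite Cmod_mult.
  eapply Rle_trans. apply Rplus_le_compat_l. apply Cmod_triangle.
  pose proof (Cmod_ge_0 (P - 1)). pose proof (Cmod_ge_0 (R - 1)).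
  assert (Cmod (P - 1) * Cmod (R - 1) <= a * b)%R by (apply Rmult_le_compat; auto). lra.
Qed.

Lemma cv_le_const (u : nat -> C) l z B : cv u l -> (forall n, (Cmod (u n - z) <= B)%R) -> (Cmod (l - z) <= B)%R.
Proof.
  intros hl hb. destruct (Rle_lt_dec (Cmod (l - z)) B) as [h|h]; auto.
  destruct (hl (Cmod (l - z) - B)%R ltac:(lra)) as [N HN].
  specialize (HN N (le_n _)). specialize (hb N).
  pose proof (Cmod_tri3 l (u N) z). rewrite (Cmod_sym l (u N)) in H. lra.
Qed.

Lemma sum_n_sumc (f : nat -> C) n : sum_n f n = sumc f (S n).
Proof.
  induction n.
  - rewrite sum_O. simpl. ring.
  - rewrite sum_Sn, IHn. reflexivity.
Qed.

Lemma rho_sigma (r : R) a b : (0 <= r <= 1)%R -> (b <= 2 * a)%nat -> (r ^ a <= sqrt r ^ b)%R.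
Proof.
  intros hr hab. replace (r ^ a)%R with (sqrt r ^ (2 * a))%R.
  - apply pow_decr; auto. split. apply sqrt_pos. rewrite <- sqrt_1. apply sqrt_le_1_alt. lra.
  - rewrite pow_mult, pow2_sqrt by lra. reflexivity.
Qed.

Lemma jterm_bound (x Q : C) : x <> 0 -> (0 < Cmod Q < 1)%R ->
  exists A, (0 <= A)%R /\ forall m n,
    (Cmod (jterm x Q (Z.of_nat m - Z.of_nat n)) <= A * Cmod Q ^ (2 * ((m - n) + (n - m))))%R.
Proof.
  intros hx hQ.
  assert (hX : (0 < Cmod x)%R) by (apply Cmod_gt_0; auto).
  destruct (gauss_bound (Cmod Q) (Cmod x) hQ ltac:(lra)) as [A1 [hA1 H1]].
  destruct (gauss_bound (Cmod Q) (/ Cmod x) hQ) as [A2 [hA2 H2]].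
  { left. apply Rinv_0_lt_compat; auto. }
  exists (A1 + A2)%R. split. lra. intros m n.
  assert (0 <= Cmod Q ^ (2 * ((m - n) + (n - m))))%R by (apply pow_le; lra).
  destruct (le_lt_dec n m) as [h|h].
  - replace (Z.of_nat m - Z.of_nat n)%Z with (Z.of_nat (m - n)) by lia.
    replace ((m - n) + (n - m))%nat with (m - n)%nat by lia.
    rewrite jterm_pos_mod. specialize (H1 (m - n)%nat).
    assert (0 <= Cmod Q ^ (2 * (m - n)))%R by (apply pow_le; lra). nra.
  - replace (Z.of_nat m - Z.of_nat n)%Z with (- Z.of_nat (n - m))%Z by lia.
    replace ((m - n) + (n - m))%nat with (n - m)%nat by lia.
    rewrite jterm_neg_mod by auto. specialize (H2 (n - m)%nat).
    assert (0 <= Cmod Q ^ (2 * (n - m)))%R by (apply pow_le; lra).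
    assert (Cmod Q ^ tri (S (n - m)) <= Cmod Q ^ tri (n - m))%R.
    { apply pow_decr. lra. simpl. lia. }
    assert (0 <= (/ Cmod x) ^ (n - m))%R. { apply pow_le. left. apply Rinv_0_lt_compat; auto. }
    nra.
Qed.

Lemma coef_bound (Q Qi : C) N m : Q <> 0 -> (Cmod Q < 1)%R -> cv (qp Q) Qi -> (m <= N)%nat ->
  (Cmod (gb Q N m * Qi - 1) <= exp (2 / (1 - Cmod Q)) / (1 - Cmod Q) * (Cmod Q ^ m + Cmod Q ^ (N - m)))%R.
Proof.
  intros hQ hr hQi hmN.
  set (r := Cmod Q) in *.
  assert (hr0 : (0 <= r)%R) by apply Cmod_ge_0.
  assert (hpow : forall k, Cmod (Q ^ k) = (r ^ k)%R) by (intros; apply Cmod_pow).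
  assert (hnz : forall k, 1 - Q ^ S k <> 0).
  { intros k h. assert (Q ^ S k = 1) by (replace (Q ^ S k) with (1 - (1 - Q ^ S k)) by ring; rewrite h; ring).
    assert (r ^ S k < 1)%R by (apply pow_lt_1_compat; [lra|lia]).
    rewrite <- hpow, H, Cmod_1 in H0. lra. }
  set (TM := fun M => prodc (fun k => 1 - Q ^ S (m + k)) M).
  destruct (prod_cv_minus (fun k => Q ^ S (m + k)) (r ^ m) r) as [T hT].
  { apply pow_le; lra. } { lra. }
  { intros k. rewrite hpow. replace (S (m + k)) with (m + k + 1)%nat by lia.
    rewrite !pow_add. assert (0 <= r ^ m * r ^ k)%R by (apply Rmult_le_pos; apply pow_le; lra). simpl. nra. }
  assert (hQiT : Qi = qp Q m * T).
  { apply (cv_unique (fun M => qp Q (m + M))).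
    - apply (cv_subseq (qp Q) Qi (fun M => m + M)%nat); auto. intros; lia.
    - eapply cv_ext. 2: apply (cv_scal (qp Q m) _ _ hT). intros M. unfold qp. rewrite prodc_add. reflexivity. }
  set (R := prodc (fun k => 1 - Q ^ S ((N - m) + k)) m).
  assert (hqN : qp Q N = qp Q (N - m) * R).
  { unfold qp, R. replace N with ((N - m) + m)%nat at 1 by lia. rewrite prodc_add. reflexivity. }
  assert (hqnz : forall n, qp Q n <> 0) by (intros; apply prodc_neq0; auto).
  assert (hgR : gb Q N m * qp Q m = R).
  { apply (Cmult_reg_r _ _ (qp Q (N - m))); auto. rewrite (gb_closed Q N m hmN), hqN. ring. }
  assert (hgQi : gb Q N m * Qi = R * T) by (rewrite hQiT, <- hgR; ring).
  rewrite hgQi.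
  set (s1 := (r ^ (N - m) / (1 - r))%R). set (s2 := (r ^ m / (1 - r))%R).
  assert (hs1 : (0 <= s1)%R) by (unfold s1; apply Rdiv_le_0_compat; [apply pow_le|]; lra).
  assert (hs2 : (0 <= s2)%R) by (unfold s2; apply Rdiv_le_0_compat; [apply pow_le|]; lra).
  assert (hR : (Cmod (R - 1) <= exp s1 - 1)%R).
  { eapply Rle_trans. apply prod_bound_minus. apply Rplus_le_compat_r. apply exp_le_mono.
    eapply Rle_trans. apply (sum_bound (fun k => Q ^ S (N - m + k)) (r ^ (N - m)) r 0 m).
    apply pow_le; lra. lra.
    { intros k. rewrite hpow. replace (S (N - m + k)) with (N - m + k + 1)%nat by lia.
      rewrite !pow_add. assert (0 <= r ^ (N - m) * r ^ k)%R by (apply Rmult_le_pos; apply pow_le; lra). simpl. nra. }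
    simpl. unfold s1. right. f_equal. ring. }
  assert (hTM : forall M, (Cmod (TM M - 1) <= exp s2 - 1)%R).
  { intros M. eapply Rle_trans. apply prod_bound_minus. apply Rplus_le_compat_r. apply exp_le_mono.
    eapply Rle_trans. apply (sum_bound (fun k => Q ^ S (m + k)) (r ^ m) r 0 M).
    apply pow_le; lra. lra.
    { intros k. rewrite hpow. replace (S (m + k)) with (m + k + 1)%nat by lia.
      rewrite !pow_add. assert (0 <= r ^ m * r ^ k)%R by (apply Rmult_le_pos; apply pow_le; lra). simpl. nra. }
    simpl. unfold s2. right. f_equal. ring. }
  assert (hlim : (Cmod (R * T - 1) <= exp (s1 + s2) - 1)%R).
  { apply (cv_le_const (fun M => R * TM M)). apply cv_scal. exact hT.
    intros M. eapply Rle_trans. apply prod2_bound. 3: apply hR. 3: apply hTM.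
    pose proof (exp_ineq1_le s1). lra. pose proof (exp_ineq1_le s2). lra.
    rewrite exp_plus. right. ring. }
  eapply Rle_trans. apply hlim.
  eapply Rle_trans. apply exp_m1_bound. lra.
  assert (hsum : (s1 + s2 = (r ^ m + r ^ (N - m)) / (1 - r))%R) by (unfold s1, s2; field; lra).
  assert (hle : (s1 + s2 <= 2 / (1 - r))%R).
  { rewrite hsum. unfold Rdiv. apply Rmult_le_compat_r. left; apply Rinv_0_lt_compat; lra.
    assert (r ^ m <= 1)%R by (apply pow_le_one; lra). assert (r ^ (N - m) <= 1)%R by (apply pow_le_one; lra). lra. }
  rewrite hsum.
  assert (exp ((r ^ m + r ^ (N - m)) / (1 - r)) <= exp (2 / (1 - r)))%R by (apply exp_le_mono; lra).
  assert (0 <= (r ^ m + r ^ (N - m)) / (1 - r))%R by lra.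
  replace (exp (2 / (1 - r)) / (1 - r) * (r ^ m + r ^ (N - m)))%R
    with ((r ^ m + r ^ (N - m)) / (1 - r) * exp (2 / (1 - r)))%R by (field; lra).
  apply Rmult_le_compat_l; auto.
Qed.

Theorem jtp (x Q : C) : x <> 0 -> Q <> 0 -> (Cmod Q < 1)%R ->
  exists Ei Qi, cv (Ep x Q) Ei /\ cv (qp Q) Qi /\ j x Q = Ei * Qi.
Proof.
  intros hx hQ hr1.
  set (r := Cmod Q) in *.
  assert (hr0 : (0 < r)%R) by (apply Cmod_gt_0; auto).
  assert (hX : (0 < Cmod x)%R) by (apply Cmod_gt_0; auto).
  assert (hpow : forall k, Cmod (Q ^ k) = (r ^ k)%R) by (intros; apply Cmod_pow).
  assert (hrk : forall k, (0 <= r ^ k)%R) by (intros; apply pow_le; lra).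
  destruct (prod_cv_minus (fun k => x * Q ^ k) (Cmod x) r) as [e1 he1]; try lra.
  { intros k. rewrite Cmod_mult, hpow. lra. }
  destruct (prod_cv_minus (fun k => Q ^ S k / x) (r / Cmod x) r) as [e2 he2]; try lra.
  { apply Rdiv_le_0_compat; lra. }
  { intros k. rewrite Cmod_div by auto. rewrite hpow. simpl. right. field. lra. }
  destruct (prod_cv_minus (fun k => Q ^ S k) 1 r) as [Qi hQi]; try lra.
  { intros k. rewrite hpow. simpl. specialize (hrk k). nra. }
  assert (hEi : cv (Ep x Q) (e1 * e2)).
  { eapply cv_ext. 2: apply (cv_mult _ _ _ _ he1 he2). intros n. unfold Ep. rewrite prodc_mul. reflexivity. }
  exists (e1 * e2), Qi. split; auto. split. exact hQi.
  destruct (jterm_bound x Q hx (conj hr0 hr1)) as [A [hA HA]].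
  set (K1 := (exp (2 / (1 - r)) / (1 - r))%R).
  assert (hK1 : (0 <= K1)%R).
  { unfold K1. apply Rdiv_le_0_compat. left; apply exp_pos. lra. }
  set (s := sqrt r).
  assert (hs : (0 <= s < 1)%R).
  { split. apply sqrt_pos. rewrite <- sqrt_1. apply sqrt_lt_1_alt. lra. }
  set (C0 := (2 * A * K1)%R).
  assert (hC0 : (0 <= C0)%R) by (unfold C0; apply Rmult_le_pos; [lra|auto]).
  set (D := fun n => Ep x Q n * Qi - jpart x Q n).
  assert (hjp : forall n, jpart x Q n = sumc (fun m => jterm x Q (Z.of_nat m - Z.of_nat n)) (S (n + n))).
  { intros n. unfold jpart. rewrite sum_n_sumc. f_equal. f_equal. lia. }
  assert (hD : forall n, D n = sumc (fun m => jterm x Q (Z.of_nat m - Z.of_nat n) * (gb Q (n + n) m * Qi - 1)) (S (n + n))).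
  { intros n. unfold D. rewrite finite_jtp by auto. rewrite hjp.
    rewrite <- (Cmult_comm Qi), <- sumc_scal, <- sumc_minus. apply sumc_ext. intros; ring. }
  assert (hDb : forall n, (Cmod (D n) <= C0 * s ^ n / (1 - s))%R).
  { intros n. rewrite hD. eapply Rle_trans. apply Cmod_sumc.
    eapply Rle_trans. 2: apply (geom_tail C0 s n (S (n + n))); auto.
    apply sumr_le. intros m hm. rewrite Cmod_mult.
    specialize (HA m n). pose proof (coef_bound Q Qi (n + n) m hQ hr1 hQi ltac:(lia)) as HB.
    fold r K1 in HB.
    set (d := ((m - n) + (n - m))%nat) in *.
    assert (h1 : (r ^ (2 * d) * r ^ m <= s ^ (n + m))%R).
    { rewrite <- pow_add. apply rho_sigma. lra. unfold d. lia. }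
    assert (h2 : (r ^ (2 * d) * r ^ (n + n - m) <= s ^ (n + m))%R).
    { rewrite <- pow_add. apply rho_sigma. lra. unfold d. lia. }
    pose proof (Cmod_ge_0 (jterm x Q (Z.of_nat m - Z.of_nat n))).
    pose proof (Cmod_ge_0 (gb Q (n + n) m * Qi - 1)).
    assert (Cmod (jterm x Q (Z.of_nat m - Z.of_nat n)) * Cmod (gb Q (n + n) m * Qi - 1)
            <= (A * r ^ (2 * d)) * (K1 * (r ^ m + r ^ (n + n - m))))%R.
    { apply Rmult_le_compat; auto. }
    eapply Rle_trans. apply H1.
    unfold C0.
    replace (A * r ^ (2 * d) * (K1 * (r ^ m + r ^ (n + n - m))))%R
      with (A * K1 * (r ^ (2 * d) * r ^ m + r ^ (2 * d) * r ^ (n + n - m)))%R by ring.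
    assert (0 <= A * K1)%R by (apply Rmult_le_pos; auto).
    nra. }
  assert (hD0 : cv D 0).
  { intros eps he.
    destruct (geom_small s hs (eps * (1 - s) / (C0 + 1))%R) as [N HN].
    { apply Rdiv_lt_0_compat; [|lra]. apply Rmult_lt_0_compat; lra. }
    exists N. intros n hn. specialize (HN n hn). specialize (hDb n).
    replace (D n - 0) with (D n) by ring.
    eapply Rle_lt_trans. apply hDb.
    assert (hsn : (0 <= s ^ n)%R) by (apply pow_le; lra).
    apply Rmult_lt_reg_r with (1 - s)%R. lra.
    replace (C0 * s ^ n / (1 - s) * (1 - s))%R with (C0 * s ^ n)%R by (field; lra).
    assert (s ^ n * (C0 + 1) < eps * (1 - s))%R.
    { apply Rmult_lt_reg_r with (/ (C0 + 1))%R. apply Rinv_0_lt_compat; lra.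
      replace (s ^ n * (C0 + 1) * / (C0 + 1))%R with (s ^ n)%R by (field; lra). exact HN. }
    nra. }
  assert (hj : cv (jpart x Q) (e1 * e2 * Qi)).
  { replace (e1 * e2 * Qi) with (e1 * e2 * Qi + (-1) * 0) by ring.
    eapply cv_ext. 2: apply (cv_plus _ _ _ _ (cv_mult _ _ _ _ hEi (cv_const Qi)) (cv_scal (-1) _ _ hD0)).
    intros n. unfold D. ring. }
  unfold j. apply cv_lim. exact hj.
Qed.

Definition pcf (q s : C) (r L : nat) (k : nat) : C := 1 - s * q ^ (r + L * k).
Definition Pc (q s : C) (r L : nat) : C :=
  @lim C_CompleteNormedModule (filtermap (prodc (pcf q s r L)) eventually).

Lemma cv_prodc (g : nat -> nat -> C) (l : nat -> C) d :
  (forall i, (i < d)%nat -> cv (g i) (l i)) -> cv (fun N => prodc (fun i => g i N) d) (prodc l d).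
Proof.
  induction d; intros H.
  - simpl. apply cv_const.
  - simpl. apply cv_mult. apply IHd. intros; apply H; lia. apply H; lia.
Qed.

Section Spec.
Variable q : C.
Hypothesis hq0 : q <> 0.
Hypothesis hq1 : (Cmod q < 1)%R.

Lemma Pc_cv_gen s r L : (Cmod s <= 1)%R -> (1 <= L)%nat ->
  exists l, cv (prodc (pcf q s r L)) l.
Proof.
  intros hs hL. apply (prod_cv_minus (fun k => s * q ^ (r + L * k)) 1 (Cmod q)); try lra.
  split. apply Cmod_ge_0. auto.
  intros k. rewrite Cmod_mult, Cmod_pow.
  assert (Cmod q ^ (r + L * k) <= Cmod q ^ k)%R.
  { apply pow_decr. split. apply Cmod_ge_0. lra. nia. }
  pose proof (Cmod_ge_0 s). assert (0 <= Cmod q ^ (r + L * k))%R by (apply pow_le; apply Cmod_ge_0).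
  nra.
Qed.

Lemma Pc_cv s r L : (Cmod s <= 1)%R -> (1 <= L)%nat -> cv (prodc (pcf q s r L)) (Pc q s r L).
Proof.
  intros hs hL. destruct (Pc_cv_gen s r L hs hL) as [l hl]. unfold Pc. rewrite (cv_lim _ _ hl). exact hl.
Qed.

Lemma Pc_neq0 s r L : (Cmod s <= 1)%R -> (1 <= r)%nat -> (1 <= L)%nat -> Pc q s r L <> 0.
Proof.
  intros hs hr hL.
  apply (prod_lim_neq0_minus (fun k => s * q ^ (r + L * k)) 1 (Cmod q)); try lra.
  split. apply Cmod_ge_0. auto.
  - intros k. rewrite Cmod_mult, Cmod_pow.
    assert (Cmod q ^ (r + L * k) <= Cmod q ^ k)%R.
    { apply pow_decr. split. apply Cmod_ge_0. lra. nia. }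
    pose proof (Cmod_ge_0 s). assert (0 <= Cmod q ^ (r + L * k))%R by (apply pow_le; apply Cmod_ge_0).
    nra.
  - intros k h. assert (E : s * q ^ (r + L * k) = 1).
    { replace (s * q ^ (r + L * k)) with (1 - (1 - s * q ^ (r + L * k))) by ring. rewrite h. ring. }
    assert (Cmod q ^ (r + L * k) < 1)%R.
    { apply pow_lt_1_compat. split. apply Cmod_ge_0. auto. lia. }
    assert (Cmod (s * q ^ (r + L * k)) < 1)%R.
    { rewrite Cmod_mult, Cmod_pow. pose proof (Cmod_ge_0 s).
      assert (0 <= Cmod q ^ (r + L * k))%R by (apply pow_le; apply Cmod_ge_0). nra. }
    rewrite E, Cmod_1 in H0. lra.
  - apply Pc_cv; auto.
Qed.

Lemma Pc_split s r L d : (Cmod s <= 1)%R -> (1 <= d)%nat -> (1 <= L)%nat ->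
  Pc q s r L = prodc (fun i => Pc q s (r + L * i) (L * d)) d.
Proof.
  intros hs hd hL. apply (cv_unique (fun N => prodc (pcf q s r L) (d * N))).
  - apply (cv_subseq (prodc (pcf q s r L)) _ (fun N => d * N)%nat). intros; nia. apply Pc_cv; auto.
  - eapply cv_ext. 2: apply (cv_prodc (fun i N => prodc (pcf q s (r + L * i) (L * d)) N)).
    + intros N. rewrite prodc_block. apply prodc_ext. intros i _. apply prodc_ext. intros k _.
      unfold pcf. f_equal. f_equal. f_equal. nia.
    + intros i _. apply Pc_cv; auto. nia.
Qed.

Lemma Cmod_m1_le : (Cmod (-1) <= 1)%R.
Proof. rewrite Cmod_m1'. lra. Qed.
Lemma Cmod_1_le : (Cmod 1 <= 1)%R.
Proof. rewrite Cmod_1. lra. Qed.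

Lemma Pc_double r L : (1 <= L)%nat -> Pc q (-1) r L * Pc q 1 r L = Pc q 1 (2 * r) (2 * L).
Proof.
  intros hL.
  apply (cv_unique (fun N => prodc (pcf q (-1) r L) N * prodc (pcf q 1 r L) N)).
  - apply cv_mult; apply Pc_cv; auto. apply Cmod_m1_le. apply Cmod_1_le.
  - eapply cv_ext. 2: apply (Pc_cv 1 (2 * r) (2 * L) Cmod_1_le ltac:(lia)).
    intros N. rewrite <- prodc_mul. apply prodc_ext. intros k _. unfold pcf.
    replace (2 * r + 2 * L * k)%nat with ((r + L * k) + (r + L * k))%nat by lia.
    rewrite Cpow_add_r. ring.
Qed.

Lemma Pc_m1 r L : (1 <= r)%nat -> (1 <= L)%nat -> Pc q (-1) r L = Pc q 1 (2 * r) (2 * L) / Pc q 1 r L.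
Proof.
  intros hr hL. rewrite <- Pc_double by auto. field. apply Pc_neq0; auto. apply Cmod_1_le.
Qed.

Lemma Jam_eq a m : (0 < a < m)%nat ->
  Jam (Z.of_nat a) m q = Pc q 1 a m * Pc q 1 (m - a) m * Pc q 1 m m.
Proof.
  intros ham. unfold Jam. rewrite zpow_nat.
  destruct (jtp (q ^ a) (q ^ m)) as [Ei [Qi [hE [hQ hj]]]].
  apply Cpow_nz; auto. apply Cpow_nz; auto.
  { rewrite Cmod_pow. apply pow_lt_1_compat. split. apply Cmod_ge_0. auto. lia. }
  rewrite hj. f_equal.
  - apply (cv_unique (Ep (q ^ a) (q ^ m))); auto.
    eapply cv_ext. 2: apply (cv_mult _ _ _ _ (Pc_cv 1 a m Cmod_1_le ltac:(lia)) (Pc_cv 1 (m - a) m Cmod_1_le ltac:(lia))).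
    intros N. unfold Ep. rewrite <- prodc_mul. apply prodc_ext. intros k _. unfold pcf.
    rewrite <- !Cpow_mult_r, <- Cpow_add_r.
    assert (E : q ^ (m - a + m * k) * q ^ a = q ^ (m * S k)) by (rewrite <- Cpow_add_r; f_equal; lia).
    rewrite <- E. field. apply Cpow_nz; auto.
  - apply (cv_unique (qp (q ^ m))); auto.
    eapply cv_ext. 2: apply (Pc_cv 1 m m Cmod_1_le ltac:(lia)).
    intros N. unfold qp. apply prodc_ext. intros k _. unfold pcf. rewrite <- Cpow_mult_r.
    replace (m * S k)%nat with (m + m * k)%nat by lia. ring.
Qed.

Lemma Jbar_eq a m : (0 < a < m)%nat ->
  Jbar (Z.of_nat a) m q = Pc q (-1) a m * Pc q (-1) (m - a) m * Pc q 1 m m.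
Proof.
  intros ham. unfold Jbar. rewrite zpow_nat.
  destruct (jtp (- q ^ a) (q ^ m)) as [Ei [Qi [hE [hQ hj]]]].
  intros h. apply (Cpow_nz q a hq0). replace (q ^ a) with (- (- q ^ a)) by ring. rewrite h. ring.
  apply Cpow_nz; auto.
  { rewrite Cmod_pow. apply pow_lt_1_compat. split. apply Cmod_ge_0. auto. lia. }
  rewrite hj. f_equal.
  - apply (cv_unique (Ep (- q ^ a) (q ^ m))); auto.
    eapply cv_ext. 2: apply (cv_mult _ _ _ _ (Pc_cv (-1) a m Cmod_m1_le ltac:(lia)) (Pc_cv (-1) (m - a) m Cmod_m1_le ltac:(lia))).
    intros N. unfold Ep. rewrite <- prodc_mul. apply prodc_ext. intros k _. unfold pcf.
    rewrite <- !Cpow_mult_r, (Cpow_add_r q a).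
    assert (E : q ^ (m - a + m * k) * q ^ a = q ^ (m * S k)) by (rewrite <- Cpow_add_r; f_equal; lia).
    rewrite <- E. field. apply Cpow_nz; auto.
  - apply (cv_unique (qp (q ^ m))); auto.
    eapply cv_ext. 2: apply (Pc_cv 1 m m Cmod_1_le ltac:(lia)).
    intros N. unfold qp. apply prodc_ext. intros k _. unfold pcf. rewrite <- Cpow_mult_r.
    replace (m * S k)%nat with (m + m * k)%nat by lia. ring.
Qed.

Lemma Jbar0_eq m : (0 < m)%nat ->
  Jbar 0 m q = 2 * Pc q (-1) m m * Pc q (-1) m m * Pc q 1 m m.
Proof.
  intros hm. unfold Jbar. simpl zpow.
  destruct (jtp (- (1)) (q ^ m)) as [Ei [Qi [hE [hQ hj]]]].
  intros h. apply C1_nz. replace (RtoC 1) with (- (- (1))) by ring. rewrite h. ring.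
  apply Cpow_nz; auto.
  { rewrite Cmod_pow. apply pow_lt_1_compat. split. apply Cmod_ge_0. auto. lia. }
  rewrite hj. f_equal.
  - apply (cv_unique (fun N => Ep (- (1)) (q ^ m) (S N))).
    + apply (cv_subseq (Ep (- (1)) (q ^ m)) _ S). intros; lia. auto.
    + eapply cv_ext. 2: apply (cv_mult _ _ _ _ (cv_scal 2 _ _ (Pc_cv (-1) m m Cmod_m1_le ltac:(lia)))
                                 (cv_subseq _ _ S (fun n => le_S _ _ (le_n n)) (Pc_cv (-1) m m Cmod_m1_le ltac:(lia)))).
      intros N. cbv beta. symmetry. unfold Ep. rewrite prodc_mul.
      rewrite (prodc_front (fun k => 1 - - (1) * (q ^ m) ^ k)).
      rewrite (prodc_ext (fun k => 1 - - (1) * (q ^ m) ^ S k) (pcf q (-1) m m)).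
      rewrite (prodc_ext (fun k => 1 - (q ^ m) ^ S k / - (1)) (pcf q (-1) m m)).
      simpl Cpow. ring.
      1-2: intros k _; unfold pcf; rewrite <- Cpow_mult_r; replace (m * S k)%nat with (m + m * k)%nat by lia.
      1-2: field.
  - apply (cv_unique (qp (q ^ m))); auto.
    eapply cv_ext. 2: apply (Pc_cv 1 m m Cmod_1_le ltac:(lia)).
    intros N. unfold qp. apply prodc_ext. intros k _. unfold pcf. rewrite <- Cpow_mult_r.
    replace (m * S k)%nat with (m + m * k)%nat by lia. ring.
Qed.

Lemma Jm_eq m : (0 < m)%nat -> Jm m q = Pc q 1 m m.
Proof.
  intros hm. unfold Jm. apply cv_lim. eapply cv_ext. 2: apply (Pc_cv 1 m m Cmod_1_le ltac:(lia)).
  intros N. induction N. reflexivity.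
  rewrite prodc_S, IHN. simpl Jpart. unfold pcf. replace (m * S N)%nat with (m + m * N)%nat by lia. ring.
Qed.

End Spec.

Lemma qtau_props (tau : C) : (0 < Im tau)%R -> qtau tau <> 0 /\ (Cmod (qtau tau) < 1)%R.
Proof.
  intros ht.
  assert (hm : Cmod (qtau tau) = exp (- (2 * PI * Im tau))).
  { unfold Cmod, qtau. simpl fst. simpl snd.
    set (a := exp (- (2 * PI * Im tau))). set (t := (2 * PI * Re tau)%R).
    replace ((a * cos t) ^ 2 + (a * sin t) ^ 2)%R with (a ^ 2 * (Rsqr (sin t) + Rsqr (cos t)))%R
      by (unfold Rsqr; ring).
    rewrite sin2_cos2, Rmult_1_r. apply sqrt_pow2. left. apply exp_pos. }
  split.
  - apply Cmod_gt_0. rewrite hm. apply exp_pos.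
  - rewrite hm. rewrite <- exp_0. apply exp_increasing. pose proof PI_RGT_0. nra.
Qed.

Theorem lemma2p3 (tau : C) (Htau : (0 < Im tau)%R) :
  let q := qtau tau in
  let common :=
    (Jam 6 60 q * Jbar 5 30 q * Jbar 10 30 q)
      / (Jbar 0 5 q * Jbar 0 30 q * Jbar 3 30 q)
    * ((Jm 6 q * Jm 60 q) / Cpow (Jm 30 q) 4) in
  (Cpow (Jm 30 q) 3 / Jbar 0 5 q * (Jam 3 6 q / Jam 3 30 q)
    - 2 * common * (Jam 9 30 q * Jam 21 30 q * Jam 15 30 q * Jam 5 30 q) = 0)
  /\
  (4 * common * (Jam 16 30 q * Jam 20 30 q * Jam 26 30 q * Jam 10 30 q)
    = Jam 4 10 q * Jam 3 15 q).
Proof.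
  cbv zeta.
  destruct (qtau_props tau Htau) as [hq0 hq1].
  set (q := qtau tau) in *.
  rewrite (Jam_eq q hq0 hq1 6 60 ltac:(lia) : Jam 6 60 q = _).
  rewrite (Jam_eq q hq0 hq1 3 6 ltac:(lia) : Jam 3 6 q = _).
  rewrite (Jam_eq q hq0 hq1 3 30 ltac:(lia) : Jam 3 30 q = _).
  rewrite (Jam_eq q hq0 hq1 9 30 ltac:(lia) : Jam 9 30 q = _).
  rewrite (Jam_eq q hq0 hq1 21 30 ltac:(lia) : Jam 21 30 q = _).
  rewrite (Jam_eq q hq0 hq1 15 30 ltac:(lia) : Jam 15 30 q = _).
  rewrite (Jam_eq q hq0 hq1 5 30 ltac:(lia) : Jam 5 30 q = _).
  rewrite (Jam_eq q hq0 hq1 16 30 ltac:(lia) : Jam 16 30 q = _).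
  rewrite (Jam_eq q hq0 hq1 20 30 ltac:(lia) : Jam 20 30 q = _).
  rewrite (Jam_eq q hq0 hq1 26 30 ltac:(lia) : Jam 26 30 q = _).
  rewrite (Jam_eq q hq0 hq1 10 30 ltac:(lia) : Jam 10 30 q = _).
  rewrite (Jam_eq q hq0 hq1 4 10 ltac:(lia) : Jam 4 10 q = _).
  rewrite (Jam_eq q hq0 hq1 3 15 ltac:(lia) : Jam 3 15 q = _).
  rewrite (Jbar_eq q hq0 hq1 5 30 ltac:(lia) : Jbar 5 30 q = _).
  rewrite (Jbar_eq q hq0 hq1 10 30 ltac:(lia) : Jbar 10 30 q = _).
  rewrite (Jbar_eq q hq0 hq1 3 30 ltac:(lia) : Jbar 3 30 q = _).
  rewrite (Jbar0_eq q hq0 hq1 5 ltac:(lia)).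
  rewrite (Jbar0_eq q hq0 hq1 30 ltac:(lia)).
  rewrite (Jm_eq q hq1 6 ltac:(lia)).
  rewrite (Jm_eq q hq1 60 ltac:(lia)).
  rewrite (Jm_eq q hq1 30 ltac:(lia)).
  cbn [Nat.mul Nat.add Nat.sub].
  rewrite (Pc_m1 q hq1 3 30 ltac:(lia) ltac:(lia)).
  rewrite (Pc_m1 q hq1 5 5 ltac:(lia) ltac:(lia)).
  rewrite (Pc_m1 q hq1 5 30 ltac:(lia) ltac:(lia)).
  rewrite (Pc_m1 q hq1 10 30 ltac:(lia) ltac:(lia)).
  rewrite (Pc_m1 q hq1 20 30 ltac:(lia) ltac:(lia)).
  rewrite (Pc_m1 q hq1 25 30 ltac:(lia) ltac:(lia)).
  rewrite (Pc_m1 q hq1 27 30 ltac:(lia) ltac:(lia)).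
  rewrite (Pc_m1 q hq1 30 30 ltac:(lia) ltac:(lia)).
  cbn [Nat.mul Nat.add Nat.sub].
  rewrite (Pc_split q hq1 1 3 6 10 Cmod_1_le ltac:(lia) ltac:(lia)).
  rewrite (Pc_split q hq1 1 3 15 4 Cmod_1_le ltac:(lia) ltac:(lia)).
  rewrite (Pc_split q hq1 1 3 30 2 Cmod_1_le ltac:(lia) ltac:(lia)).
  rewrite (Pc_split q hq1 1 4 10 6 Cmod_1_le ltac:(lia) ltac:(lia)).
  rewrite (Pc_split q hq1 1 4 30 2 Cmod_1_le ltac:(lia) ltac:(lia)).
  rewrite (Pc_split q hq1 1 5 5 12 Cmod_1_le ltac:(lia) ltac:(lia)).
  rewrite (Pc_split q hq1 1 5 30 2 Cmod_1_le ltac:(lia) ltac:(lia)).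
  rewrite (Pc_split q hq1 1 6 6 10 Cmod_1_le ltac:(lia) ltac:(lia)).
  rewrite (Pc_split q hq1 1 6 10 6 Cmod_1_le ltac:(lia) ltac:(lia)).
  rewrite (Pc_split q hq1 1 9 30 2 Cmod_1_le ltac:(lia) ltac:(lia)).
  rewrite (Pc_split q hq1 1 10 10 6 Cmod_1_le ltac:(lia) ltac:(lia)).
  rewrite (Pc_split q hq1 1 10 30 2 Cmod_1_le ltac:(lia) ltac:(lia)).
  rewrite (Pc_split q hq1 1 12 15 4 Cmod_1_le ltac:(lia) ltac:(lia)).
  rewrite (Pc_split q hq1 1 14 30 2 Cmod_1_le ltac:(lia) ltac:(lia)).
  rewrite (Pc_split q hq1 1 15 15 4 Cmod_1_le ltac:(lia) ltac:(lia)).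
  rewrite (Pc_split q hq1 1 15 30 2 Cmod_1_le ltac:(lia) ltac:(lia)).
  rewrite (Pc_split q hq1 1 16 30 2 Cmod_1_le ltac:(lia) ltac:(lia)).
  rewrite (Pc_split q hq1 1 20 30 2 Cmod_1_le ltac:(lia) ltac:(lia)).
  rewrite (Pc_split q hq1 1 21 30 2 Cmod_1_le ltac:(lia) ltac:(lia)).
  rewrite (Pc_split q hq1 1 25 30 2 Cmod_1_le ltac:(lia) ltac:(lia)).
  rewrite (Pc_split q hq1 1 26 30 2 Cmod_1_le ltac:(lia) ltac:(lia)).
  rewrite (Pc_split q hq1 1 27 30 2 Cmod_1_le ltac:(lia) ltac:(lia)).
  rewrite (Pc_split q hq1 1 30 30 2 Cmod_1_le ltac:(lia) ltac:(lia)).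
  cbn [prodc Nat.mul Nat.add].
  assert (HB : forall r, (1 <= r)%nat -> Pc q 1 r 60 <> 0).
  { intros r hr. apply Pc_neq0; auto. apply Cmod_1_le. lia. }
  split.
  - field. repeat split; apply HB; lia.
  - field. repeat split; apply HB; lia.
Qed.
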